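(* Let $(X_{1,\infty},f_{1,\infty},\mu_{1,\infty})$ be a metric nonautonomous dynamical system and let $\mathcal{F}$ be a nonempty subset of $\mathcal{E}_{\max}$. Then \[ \mathcal{H}(\mathcal{F}):=\{\mathcal{Q}_{1,\infty}\in\mathcal{E}_{\max}\;:\;\exists\,\mathcal{P}_{1,\infty}\in\mathcal{F}\text{ with }h(f_{1,\infty};\mathcal{Q}_{1,\infty})\le h(f_{1,\infty};\mathcal{P}_{1,\infty})\} \] is an admissible class with $\mathcal{F}\subset\mathcal{H}(\mathcal{F})\subset\mathcal{E}_{\max}$. Consequently $\mathcal{E}(\mathcal{F})\subset\mathcal{H}(\mathcal{F})$ and \[ h_{\mathcal{E}(\mathcal{F})}(f_{1,\infty})=h_{\mathcal{H}(\mathcal{F})}(f_{1,\infty})=\sup_{\mathcal{P}_{1,\infty}\in\mathcal{F}}h(f_{1,\infty};\mathcal{P}_{1,\infty}). \]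
   Context: A metric NDS consists of probability spaces $(X_n,\mathcal{A}_n,\mu_n)$ and measurable maps $f_n:X_n\to X_{n+1}$ with $f_n\mu_n=\mu_{n+1}$; $f_k^n=f_{k+n-1}\circ\cdots\circ f_k$, $f_k^{-n}$ = preimage. $H_\mu(\mathcal{P})=-\sum_P\mu(P)\log\mu(P)$; $h(f_{1,\infty};\mathcal{P}_{1,\infty})=\limsup_n\frac1nH_{\mu_1}(\bigvee_{i=0}^{n-1}f_1^{-i}\mathcal{P}_{i+1})$; $h_{\mathcal{E}}(f_{1,\infty})=\sup_{\mathcal{P}_{1,\infty}\in\mathcal{E}}h(f_{1,\infty};\mathcal{P}_{1,\infty})$. $\mathcal{E}_{\max}$ is the class of all sequences $\{\mathcal{P}_n\}$ of finite measurable partitions of $X_n$ with $\sup_n\#\mathcal{P}_n<\infty$. An admissible class is a nonempty $\mathcal{E}\subset\mathcal{E}_{\max}$ such that (B) it is closed under passing to termwise coarser sequences and (C) $\mathcal{P}_{1,\infty}\in\mathcal{E}$, $m\ge1$ imply $\{\bigvee_{i=0}^{m-1}f_k^{-i}\mathcal{P}_{k+i}\}_{k\ge1}\in\mathcal{E}$ (together with (A): uniformly bounded cardinalities, which holds automatically in $\mathcal{E}_{\max}$). Intersections of admissible classes (when nonempty) are admissible; $\mathcal{E}(\mathcal{F})$ denotes the intersection of all admissible classes containing $\mathcal{F}$, the smallest admissible class containing $\mathcal{F}$. *)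

(* Defs.v *)
From HB Require Import structures.
From mathcomp Require Import all_boot all_order all_algebra.
From mathcomp Require Import finmap.
From mathcomp Require Import all_classical all_reals all_analysis.
Unset Printing Implicit Defensive.
Import Order.TTheory GRing.Theory Num.Theory.
Local Open Scope classical_set_scope.
Local Open Scope ring_scope.

Section NDS.
Context (R : realType) (d : nat -> measure_display)
        (X : forall n : nat, measurableType (d n)).

(* A (finite) sequence-indexed family of (candidate) partitions:
   P n is a set of subsets of X n.  Indices are 0-based: X 0 is X_1. *)
Definition pseq := forall n : nat, set (set (X n)).

Definition fin_meas_partition (n : nat) (P : set (set (X n))) : Prop :=
  [/\ finite_set P,
      (forall A, P A -> measurable A),
      (forall A, P A -> A !=set0),
      (forall A B, P A -> P B -> A `&` B !=set0 -> A = B)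
    & \bigcup_(A in P) A = setT].

Definition Emax : set pseq :=
  [set P | (forall n, @fin_meas_partition n (P n)) /\
           exists C : nat, forall n, (#|` fset_set (P n)|%fset <= C)%N].

Definition coarser (Q P : pseq) : Prop :=
  forall n A, P n A -> exists2 B, Q n B & A `<=` B.

Variable f : forall n, X n -> X n.+1.

Fixpoint fiter (k n : nat) : X k -> X (n + k) :=
  match n return X k -> X (n + k) with
  | 0 => id
  | m.+1 => fun x => f (m + k)%N (fiter k m x)
  end.

Definition ppreim {T U : Type} (g : T -> U) (P : set (set U)) : set (set T) :=
  [set C | exists2 A, P A & C = g @^-1` A /\ C !=set0].

Definition pjoin {T : Type} (P Q : set (set T)) : set (set T) :=
  [set C | exists A B, [/\ P A, Q B, C = A `&` B & C !=set0]].

(* \bigvee_{i=0}^{m-1} f_k^{-i} P_{k+i} *)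
Fixpoint jn (P : pseq) (k m : nat) : set (set (X k)) :=
  match m with
  | 0 => [set setT]
  | m'.+1 => pjoin (jn P k m') (ppreim (fiter k m') (P (m' + k)%N))
  end.

Definition admissible (E : set pseq) : Prop :=
  [/\ E !=set0,
      E `<=` Emax,
      (forall P Q, E P -> Emax Q -> coarser Q P -> E Q)
    & (forall P (m : nat), E P -> (1 <= m)%N ->
         E (fun k => jn P k m))].

Definition Ecl (F : set pseq) : set pseq :=
  [set P | forall E, admissible E -> F `<=` E -> E P].

Variable mu : forall n, probability (X n) R.

Definition Hent_gen (n : nat) (P : set (set (X n))) : R :=
  - (\sum_(A \in P) (fine (mu n A) * ln (fine (mu n A)))).

Definition hP (P : pseq) : \bar R :=
  limn_esup (fun n : nat => ((n%:R)^-1 * Hent_gen 0 (jn P 0 n))%:E).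

Definition hE (E : set pseq) : \bar R := ereal_sup [set hP P | P in E].

Definition Hcl (F : set pseq) : set pseq :=
  [set Q | Emax Q /\ exists2 P, F P & (hP Q <= hP P)%E].

End NDS.

Definition metric_NDS (R : realType) (d : nat -> measure_display)
  (X : forall n : nat, measurableType (d n))
  (mu : forall n, probability (X n) R) (f : forall n, X n -> X n.+1) : Prop :=
  (forall n, measurable_fun setT (f n)) /\
  (forall n (A : set (X n.+1)), measurable A -> mu n (f n @^-1` A) = mu n.+1 A).

(* Main.v *)
Require Import Defs.
From HB Require Import structures.
From mathcomp Require Import all_boot all_order all_algebra.
From mathcomp Require Import finmap.
From mathcomp Require Import all_classical all_reals all_analysis.
From mathcomp Require Import ring lra zify.
Import Order.TTheory GRing.Theory Num.Theory.
Local Open Scope classical_set_scope.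

Section SetPart.
Context {T : Type}.

Definition same (P : set (set T)) (x y : T) := exists2 A, P A & A x /\ A y.

Definition disj (P : set (set T)) :=
  forall A B, P A -> P B -> A `&` B !=set0 -> A = B.

Lemma same_pjoin P Q x y : same (pjoin P Q) x y <-> same P x y /\ same Q x y.
Proof.
split.
  move=> [C [A [B [PA QB -> _]]] [[Ax Bx] [Ay By]]].
  by split; [exists A | exists B].
move=> [[A PA [Ax Ay]] [B QB [Bx By]]].
exists (A `&` B); last by split.
by exists A, B; split => //; exists x.
Qed.

Lemma same_setT x y : same [set setT] x y.
Proof. by exists setT. Qed.

Lemma refine_of_same (P Q : set (set T)) :
  (forall B, Q B -> B !=set0) -> disj P ->
  (forall x y, same Q x y -> same P x y) ->
  forall B, Q B -> exists2 A, P A & B `<=` A.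
Proof.
move=> Q0 dP hs B QB; have [x Bx] := Q0 B QB.
have [A PA [Ax _]] := hs x x (ex_intro2 _ _ B QB (conj Bx Bx)).
exists A => // y By.
have [A' PA' [A'x A'y]] := hs x y (ex_intro2 _ _ B QB (conj Bx By)).
by rewrite (dP A A' PA PA') //; exists x.
Qed.

End SetPart.

Lemma same_ppreim {T U : Type} (g : T -> U) (P : set (set U)) x y :
  same (ppreim g P) x y <-> same P (g x) (g y).
Proof.
split.
  by move=> [C [A PA [-> _]] [Ax Ay]]; exists A.
move=> [A PA [Ax Ay]]; exists (g @^-1` A) => //.
by exists A => //; split => //; exists x.
Qed.

Lemma card_le_seq {T : choiceType} {S : set T} {s : seq T} :
  finite_set S -> (forall x, S x -> x \in s) -> (#|` fset_set S| <= size s)%N.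
Proof.
move=> fS hs; apply: uniq_leq_size; first exact: fset_uniq.
by move=> x; rewrite in_fset_set // inE => /hs.
Qed.

Lemma finite_seq_sub {T : choiceType} {S : set T} {s : seq T} :
  (forall x, S x -> x \in s) -> finite_set S.
Proof. by move=> hs; apply: (sub_finite_set _ (finite_seq s)) => x /hs. Qed.

Section MPart.
Context {dd : measure_display} {T : measurableType dd}.

Definition isPart (P : set (set T)) : Prop :=
  [/\ finite_set P,
      (forall A, P A -> measurable A),
      (forall A, P A -> A !=set0),
      (forall A B, P A -> P B -> A `&` B !=set0 -> A = B)
    & \bigcup_(A in P) A = setT].

Lemma isPart_cover {P} : isPart P -> forall x : T, exists2 A, P A & A x.
Proof.
case=> _ _ _ _ hc x.
have : (\bigcup_(A in P) A) x by rewrite hc.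
by case=> A PA Ax; exists A.
Qed.

Lemma isPart_pjoin {P Q} : isPart P -> isPart Q ->
  isPart (pjoin P Q) /\
  (#|` fset_set (pjoin P Q)| <= #|` fset_set P| * #|` fset_set Q|)%N.
Proof.
move=> hP hQ; have cP := isPart_cover hP; have cQ := isPart_cover hQ.
case: hP => fP mP nP dP _; case: hQ => fQ mQ nQ dQ _.
pose s := [seq A `&` B | A <- enum_fset (fset_set P), B <- enum_fset (fset_set Q)].
have hs : forall C, pjoin P Q C -> C \in s.
  move=> C [A [B [PA QB -> _]]]; apply: allpairs_f.
    by rewrite in_fset_set // inE.
  by rewrite in_fset_set // inE.
have fJ := finite_seq_sub hs.
split; last first.
  by rewrite -(size_allpairs (fun A B => A `&` B)); apply: card_le_seq.
split => //.
- by move=> C [A [B [PA QB -> _]]]; apply: measurableI; [apply: mP|apply: mQ].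
- by move=> C [A [B [_ _ _ ?]]].
- move=> C C' [A [B [PA QB -> _]]] [A' [B' [PA' QB' -> _]]] [x [[Ax Bx] [A'x B'x]]].
  rewrite (dP A A') //; last by exists x.
  by rewrite (dQ B B') //; exists x.
- apply/seteqP; split => // x _.
  have [A PA Ax] := cP x; have [B QB Bx] := cQ x.
  exists (A `&` B) => //; exists A, B; split => //; by exists x.
Qed.

End MPart.

Lemma isPart_ppreim {dd : measure_display} {T : measurableType dd} {dd' : measure_display} {U : measurableType dd'}
   {g : T -> U} {P : set (set U)} :
  measurable_fun setT g -> isPart P ->
  isPart (ppreim g P) /\ (#|` fset_set (ppreim g P)| <= #|` fset_set P|)%N.
Proof.
move=> mg hP; have cP := isPart_cover hP.
case: hP => fP mP nP dP _.
pose s := [seq g @^-1` A | A <- enum_fset (fset_set P)].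
have hs : forall C, ppreim g P C -> C \in s.
  move=> C [A PA [-> _]]; apply: map_f; by rewrite in_fset_set // inE.
have fJ := finite_seq_sub hs.
split; last first.
  by rewrite -(size_map (fun A => g @^-1` A)); apply: card_le_seq.
split => //.
- move=> C [A PA [-> _]]; rewrite -[_ @^-1` _]setTI; apply: mg => //; exact: mP.
- by move=> C [A PA [_ ?]].
- move=> C C' [A PA [-> _]] [A' PA' [-> _]] [x [Ax A'x]].
  by rewrite (dP A A') //; exists (g x).
- apply/seteqP; split => // x _.
  have [A PA Ax] := cP (g x).
  exists (g @^-1` A) => //; exists A => //; split => //; by exists x.
Qed.

Lemma isPart_setT {dd : measure_display} {T : measurableType dd} (x0 : T) : isPart [set @setT T] /\ (#|` fset_set [set (@setT T)]| <= 1)%N.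
Proof.
split; last by rewrite fset_set1 cardfs1.
split.
- exact: finite_set1.
- by move=> A ->.
- by move=> A ->; exists x0.
- by move=> A B -> ->.
- by apply/seteqP; split => // x _; exists setT.
Qed.

Section Scalar.
Context {R : realType}.
Local Open Scope ring_scope.

Lemma xlnx_mono (q s : R) : 0 <= q -> q <= s -> q * ln q <= q * ln s.
Proof.
move=> q0 qs; have [->|qp] := eqVneq q 0; first by rewrite !mul0r.
have qp' : 0 < q by rewrite lt_def qp q0.
have sp : 0 < s by apply: lt_le_trans qs.
by rewrite ler_wpM2l // ler_ln // posrE.
Qed.

Lemma xlnx_up (q s : R) : 0 <= q -> q <= s -> - (q * ln q) <= - (q * ln s) + s.
Proof.
move=> q0 qs; have [->|qp] := eqVneq q 0; first by rewrite !mul0r oppr0 add0r (le_trans q0 qs).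
have qp' : 0 < q by rewrite lt_def qp q0.
have sp : 0 < s by apply: lt_le_trans qs.
have h : ln (s / q) <= s / q - 1.
  have e : 1 + (s / q - 1) = s / q by rewrite addrC subrK.
  have := @le_ln1Dx R (s / q - 1); rewrite e; apply.
  by have := divr_gt0 sp qp'; lra.
rewrite ln_div ?posrE // in h.
have h2 := ler_wpM2l q0 h.
have e2 : q * (s / q - 1) = s - q by rewrite mulrBr mulr1 mulrCA mulfV ?mulr1 // gt_eqF.
rewrite e2 mulrBr in h2; lra.
Qed.

Lemma ler_sum_seq (I : eqType) (r : seq I) (F G : I -> R) :
  (forall i, i \in r -> true -> F i <= G i) ->
  \sum_(i <- r) F i <= \sum_(i <- r) G i.
Proof.
move=> h; rewrite big_seq_cond [X in _ <= X]big_seq_cond.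
by apply: ler_sum => i /andP [ir _]; apply: h.
Qed.

End Scalar.

Section Entropy.
Context {dd : measure_display} {T : measurableType dd} {R : realType}
  (mu : probability T R).
Local Open Scope ring_scope.

Definition pp (A : set T) : R := fine (mu A).
Definition ent (P : set (set T)) : R :=
  - (\sum_(A \in P) (pp A * ln (pp A))).

Lemma pp_ge0 A : 0 <= pp A.
Proof. exact/fine_ge0/measure_ge0. Qed.

Lemma ppE A : measurable A -> (pp A)%:E = mu A.
Proof. by move=> mA; rewrite fineK // fin_num_measure. Qed.

Lemma pp_le A B : measurable A -> measurable B -> A `<=` B -> pp A <= pp B.
Proof.
move=> mA mB AB; rewrite -lee_fin !ppE //.
by apply: le_measure => //; rewrite inE.
Qed.

Lemma pp_sum (A : set T) (P : set (set T)) : measurable A -> isPart P ->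
  (forall C, P C -> C `<=` A \/ A `&` C = set0) ->
  pp A = \sum_(C <- fset_set P) (if `[< C `<=` A >] then pp C else 0).
Proof.
move=> mA hP hA; case: (hP) => fP mP _ dP cP.
apply: EFin_inj; rewrite -sumEFin ppE //.
have eA : A = \bigcup_(C in P) (A `&` C) by rewrite -setI_bigcupr cP setIT.
rewrite {1}eA.
rewrite measure_fin_bigcup //; last 2 first.
- move=> C C' PC PC' [x [[_ Cx] [_ C'x]]]; apply: dP => //; by exists x.
- by move=> C PC; apply: measurableI => //; apply: mP.
rewrite fsbig_finite //; apply: eq_big_seq => C.
rewrite in_fset_set // inE => PC.
case: asboolP => CA.
  have -> : A `&` C = C by apply/seteqP; split => [x [_ ?] //|x Cx]; split; [exact: (CA x Cx) | exact: Cx].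
  by rewrite /= ppE //; apply: mP.
case: (hA C PC) => // ->; by rewrite measure0.
Qed.

End Entropy.

Section EntRefine.
Context {dd : measure_display} {T : measurableType dd} {R : realType}
  (mu : probability T R).
Local Open Scope ring_scope.

Lemma pp_total P : isPart P -> \sum_(A <- fset_set P) pp mu A = 1.
Proof.
move=> hP.
have h1 : pp mu setT = 1 by rewrite /pp probability_setT.
rewrite -h1 (@pp_sum _ _ _ mu setT P measurableT hP); last by move=> C _; left.
by apply: eq_bigr => C _; rewrite asboolT.
Qed.

Lemma block_sum (P : set (set T)) (C A0 : set T) (F : set T -> R) :
  isPart P -> P A0 -> C `<=` A0 -> C !=set0 ->
  \sum_(A <- fset_set P) (if `[< C `<=` A >] then F A else 0) = F A0.
Proof.
move=> hP PA0 CA0 [x Cx]; case: (hP) => fP _ _ dP _.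
rewrite (bigD1_seq A0) /=; last exact: fset_uniq.
  2: by rewrite in_fset_set // inE.
rewrite asboolT // big1_seq ?addr0 // => A /andP [AA0].
rewrite in_fset_set // inE => PA.
case: asboolP => // CA; exfalso; move/eqP: AA0; apply.
apply: dP => //; by exists x; split; [exact: (CA x Cx) | exact: (CA0 x Cx)].
Qed.

Lemma ent_refine {P Q : set (set T)} : isPart P -> isPart Q ->
  (forall C, Q C -> exists2 A, P A & C `<=` A) ->
  (ent mu P <= ent mu Q) /\ (forall K : nat, (forall A, P A ->
      (count (fun C => `[< C `<=` A >]) (fset_set Q) <= K)%N) ->
   ent mu Q <= ent mu P + K%:R).
Proof.
move=> hP hQ hr.
case: (hP) => fP mP nP dP cP; case: (hQ) => fQ mQ nQ dQ cQ.
have dich : forall A C, P A -> Q C -> C `<=` A \/ A `&` C = set0.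
  move=> A C PA QC; have [A' PA' CA'] := hr C QC.
  case: (pselect (A `&` C !=set0)) => [[x [Ax Cx]]|h].
    by left; rewrite (dP A A') //; exists x; split => //; exact: CA'.
  by right; apply/seteqP; split => // x Hx; exfalso; apply: h; exists x.
have regroup : forall G : set T -> R,
    \sum_(C <- fset_set Q) G C =
    \sum_(A <- fset_set P) \sum_(C <- fset_set Q) (if `[< C `<=` A >] then G C else 0).
  move=> G; rewrite exchange_big; apply: eq_big_seq => C.
  rewrite in_fset_set // inE => QC.
  have [A0 PA0 CA0] := hr C QC.
  by rewrite (@block_sum P C A0 (fun _ => G C)) //; apply: nQ.
have ppA : forall A, P A ->
    pp mu A = \sum_(C <- fset_set Q) (if `[< C `<=` A >] then pp mu C else 0).
  move=> A PA; apply: pp_sum => //; first exact: mP.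
  by move=> C QC; apply: dich.
rewrite /ent !fsbig_finite //; split.
  rewrite lerN2 regroup; apply: ler_sum_seq => A; rewrite in_fset_set // inE => PA _.
  rewrite [X in _ <= X * _](ppA A PA) big_distrl /=.
  apply: ler_sum_seq => C; rewrite in_fset_set // inE => QC _.
  case: asboolP => CA; last by rewrite mul0r.
  by apply: xlnx_mono; [exact: pp_ge0 | apply: pp_le => //; [exact: mQ | exact: mP]].
move=> K hK.
rewrite -sumrN regroup.
apply: (@le_trans _ _ (\sum_(A <- fset_set P) (- (pp mu A * ln (pp mu A)) + pp mu A * K%:R))).
  apply: ler_sum_seq => A; rewrite in_fset_set // inE => PA _.
  apply: (@le_trans _ _ (\sum_(C <- fset_set Q)
     ((if `[< C `<=` A >] then - (pp mu C * ln (pp mu A)) else 0) +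
      (if `[< C `<=` A >] then pp mu A else 0)))).
    apply: ler_sum_seq => C; rewrite in_fset_set // inE => QC _.
    case: asboolP => CA; last by rewrite addr0.
    by apply: xlnx_up; [exact: pp_ge0 | apply: pp_le => //; [exact: mQ | exact: mP]].
  rewrite big_split /=; apply: lerD.
    rewrite [X in - (X * _)](ppA A PA) big_distrl /= -sumrN le_eqVlt; apply/orP; left; apply/eqP.
    by apply: eq_bigr => C _; case: asboolP => _; rewrite ?mul0r ?oppr0.
  rewrite -big_mkcond big_const_seq iter_addr_0 -(mulr_natr (pp mu A)).
  by apply: ler_wpM2l; [exact: pp_ge0 | rewrite ler_nat; apply: hK].
rewrite big_split /= sumrN -big_distrl /= pp_total // mul1r.
by rewrite le_eqVlt eqxx.
Qed.

End EntRefine.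

Section Limsup.
Context {R : realType}.
Local Open Scope ereal_scope.

Definition Ls (u : (\bar R)^nat) := ereal_inf (range (esups u)).

Lemma limn_esupLs u : limn_esup u = Ls u.
Proof. by rewrite limn_esup_lim; apply: cvg_lim => //; exact: cvg_esups_inf. Qed.

Lemma esups_ub (u : (\bar R)^nat) n k : (n <= k)%N -> u k <= esups u n.
Proof. by move=> nk; apply: ereal_sup_ubound; exists k. Qed.

Lemma Ls_le_esups u n : Ls u <= esups u n.
Proof. by apply: ereal_inf_lbound; exists n. Qed.

Lemma Ls_mono (u v : (\bar R)^nat) : (forall n, u n <= v n) -> Ls u <= Ls v.
Proof.
move=> uv; apply: le_ereal_inf_tmp => _ [n _ <-].
apply: (le_trans (Ls_le_esups u n)); apply: ge_ereal_sup => _ [k nk <-].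
by apply: (le_trans (uv k)); apply: esups_ub.
Qed.

Lemma Ls_vanish (a : nat -> R) (K : R) : (0 <= K)%R ->
  Ls (fun n => ((n%:R)^-1 * (a n + K))%:E) <= Ls (fun n => ((n%:R)^-1 * a n)%:E).
Proof.
move=> K0; apply/lee_addgt0Pr => e e0.
rewrite -leeBlDr //; apply: le_ereal_inf_tmp => _ [n _ <-].
rewrite leeBlDr //.
pose M := maxn n (Num.Def.trunc (K / e)).+1.
apply: (le_trans (Ls_le_esups _ M)).
apply: (@le_trans _ _ (esups (fun n => ((n%:R)^-1 * a n)%:E) M + e%:E)); last first.
  by rewrite leeD2r //; apply: nonincreasing_esups; rewrite leq_maxl.
apply: ge_ereal_sup => _ [k Mk <-] /=.
have k0 : (0 < k)%N by apply: leq_trans Mk; rewrite leq_max orbT.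
apply: (@le_trans _ _ (((k%:R)^-1 * a k)%:E + e%:E)); last first.
  by rewrite leeD2r //; apply: esups_ub.
rewrite -EFinD lee_fin mulrDr lerD2l.
have kp : (0 < k%:R :> R)%R by rewrite ltr0n.
have h : (K / e < k%:R)%R.
  apply: (lt_le_trans (truncnS_gt (K / e))).
  by rewrite ler_nat; apply: leq_trans Mk; rewrite leq_maxr.
rewrite mulrC ler_pdivrMr //; move: h; rewrite ltr_pdivrMr // => /ltW.
by rewrite mulrC.
Qed.

End Limsup.

Section NDSlemmas.
Context (d : nat -> measure_display) (X : forall n : nat, measurableType (d n))
  (f : forall n, X n -> X n.+1).

Local Notation fiter := (fiter d X f).
Local Notation jn := (jn d X f).

Lemma fiter_meas (mf : forall n, measurable_fun setT (f n)) k n :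
  measurable_fun setT (fiter k n).
Proof.
elim: n => [|n IH] /=; first exact: measurable_id.
exact: (measurableT_comp (mf _) IH).
Qed.

Lemma same_jn (P : pseq d X) k m x y :
  same (jn P k m) x y <->
  (forall i, (i < m)%N -> same (P (i + k)%N) (fiter k i x) (fiter k i y)).
Proof.
elim: m => [|m IH] /=.
  by split => // _; apply: same_setT.
rewrite same_pjoin same_ppreim IH; split.
  move=> [h1 h2] i; rewrite ltnS leq_eqVlt => /orP [/eqP ->|im] //.
  exact: h1.
move=> h; split; last exact: h.
by move=> i im; apply: h; apply: ltnW.
Qed.

Lemma cast_same (P : pseq d X) a b (e : a = b) (u v : X a) :
  same (P b) (eq_rect a X u b e) (eq_rect a X v b e) <-> same (P a) u v.
Proof. by case: b / e. Qed.

Lemma eq_rect_f a b (e : a = b) (u : X a) :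
  f b (eq_rect a X u b e) = eq_rect a.+1 X (f a u) b.+1 (congr1 S e).
Proof. by case: b / e. Qed.

Lemma fiter_comp k j i x (e : (i + j + k = i + (j + k))%N) :
  fiter (j + k) i (fiter k j x) = eq_rect _ X (fiter k (i + j) x) _ e.
Proof.
elim: i e => [|i IH] e /=.
  by rewrite (eq_irrelevance e (erefl _)).
have e' : (i + j + k = i + (j + k))%N by rewrite addnA.
rewrite (IH e') eq_rect_f.
by rewrite (eq_irrelevance (congr1 S e') e).
Qed.

End NDSlemmas.

Section NDSent.
Context (d : nat -> measure_display) (X : forall n : nat, measurableType (d n))
  (f : forall n, X n -> X n.+1)
  (mf : forall n, measurable_fun setT (f n))
  (ne : forall n, [set: X n] !=set0).

Local Notation fiter := (fiter d X f).
Local Notation jn := (jn d X f).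

Lemma jn_part {P : pseq d X} {C : nat} :
  (forall n, isPart (P n)) -> (forall n, (#|` fset_set (P n)| <= C)%N) ->
  forall k m, isPart (jn P k m) /\ (#|` fset_set (jn P k m)| <= C ^ m)%N.
Proof.
move=> hP hC k; elim => [|m [IH1 IH2]] /=.
  have [x0 _] := ne k; have [h1 h2] := isPart_setT x0.
  by split; rewrite ?expn0.
have [g1 g2] := isPart_ppreim (@fiter_meas d X f mf k m) (hP (m + k)%N).
have [j1 j2] := isPart_pjoin IH1 g1.
split => //; rewrite expnS mulnC; apply: (leq_trans j2); apply: leq_mul => //.
exact: (leq_trans g2).
Qed.

Context {R : realType} (mu0 : probability (X 0) R).
Local Open Scope ring_scope.

Lemma ent_coarser (P Q : pseq d X) (CP CQ : nat) :
  (forall n, isPart (P n)) -> (forall n, (#|` fset_set (P n)| <= CP)%N) ->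
  (forall n, isPart (Q n)) -> (forall n, (#|` fset_set (Q n)| <= CQ)%N) ->
  coarser d X Q P -> forall n, ent mu0 (jn Q 0 n) <= ent mu0 (jn P 0 n).
Proof.
move=> hP hCP hQ hCQ hco n.
have [a1 _] := jn_part hQ hCQ 0 n; have [b1 _] := jn_part hP hCP 0 n.
apply: (ent_refine mu0 a1 b1 _).1.
case: (a1) => _ _ _ da _; case: (b1) => _ _ nb _ _.
apply: refine_of_same => // x y /(same_jn d X f) hb; apply/(same_jn d X f) => i /hb [A PA [Ax Ay]].
by have [B QB AB] := hco _ _ PA; exists B => //; split; apply: AB.
Qed.

Lemma ent_step {P : pseq d X} {C : nat} :
  (forall n, isPart (P n)) -> (forall n, (#|` fset_set (P n)| <= C)%N) ->
  forall N, ent mu0 (jn P 0 N.+1) <= ent mu0 (jn P 0 N) + C%:R.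
Proof.
move=> hP hC N.
have [a1 _] := jn_part hP hC 0 N; have [b1 _] := jn_part hP hC 0 N.+1.
have [g1 g2] := isPart_ppreim (@fiter_meas d X f mf 0 N) (hP (N + 0)%N).
have := ent_refine mu0 a1 b1 _; case.
  by move=> D /= [A [B [PA _ -> _]]]; exists A => // x [].
move=> _; apply => A hA.
case: (a1) => _ _ _ da _; case: (b1) => fb _ _ _ _.
rewrite -size_filter.
apply: (@leq_trans (size [seq A `&` B | B <- enum_fset (fset_set (ppreim (fiter 0 N) (P (N + 0)%N)))])).
  apply: uniq_leq_size; first by apply: filter_uniq; exact: fset_uniq.
  move=> D; rewrite mem_filter => /andP [/asboolP DA].
  rewrite in_fset_set //= in_setE => -[A' [B [PA' QB eD [x Dx]]]].
  have AA' : A' = A.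
    apply: da => //; exists x; split; last exact: DA.
    by move: Dx; rewrite eD => -[].
  rewrite eD AA'; apply: map_f; rewrite in_fset_set; [by rewrite in_setE | by case: g1].
by rewrite size_map; apply: (leq_trans g2).
Qed.

Lemma ent_shift (P : pseq d X) (C : nat) :
  (forall n, isPart (P n)) -> (forall n, (#|` fset_set (P n)| <= C)%N) ->
  forall n m, ent mu0 (jn P 0 (n + m)) <= ent mu0 (jn P 0 n) + (m * C)%:R.
Proof.
move=> hP hC n; elim => [|m IH].
  by rewrite addn0 mul0n addr0.
rewrite addnS; apply: (le_trans (ent_step hP hC _)).
by move: IH; rewrite mulSn natrD; lra.
Qed.

Lemma ent_Pm (P : pseq d X) (C : nat) :
  (forall n, isPart (P n)) -> (forall n, (#|` fset_set (P n)| <= C)%N) ->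
  forall m n, ent mu0 (jn (fun k => jn P k m.+1) 0 n) <= ent mu0 (jn P 0 (n + m)).
Proof.
move=> hP hC m n.
have hPm : forall k, isPart (jn P k m.+1) by move=> k; exact: (jn_part hP hC k m.+1).1.
have hCm : forall k, (#|` fset_set (jn P k m.+1)| <= C ^ m.+1)%N
  by move=> k; exact: (jn_part hP hC k m.+1).2.
have [a1 _] := jn_part hPm hCm 0 n; have [b1 _] := jn_part hP hC 0 (n + m).
apply: (ent_refine mu0 a1 b1 _).1.
case: (a1) => _ _ _ da _; case: (b1) => _ _ nb _ _.
apply: refine_of_same => // x y /(same_jn d X f) hb; apply/(same_jn d X f) => j jn_.
apply/(same_jn d X f) => i im.
have e : (i + j + 0 = i + (j + 0))%N by rewrite addnA.
rewrite !(fiter_comp d X f _ _ _ _ e); apply/(cast_same d X P); apply: hb.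
by rewrite ltnS in im; lia.
Qed.

End NDSent.

Lemma EmaxP (d : nat -> measure_display) (X : forall n : nat, measurableType (d n))
  (P : pseq d X) :
  Emax d X P <-> (forall n, isPart (P n)) /\ exists C, forall n, (#|` fset_set (P n)| <= C)%N.
Proof. by []. Qed.

Theorem mainTheorem11 (R : realType) (d : nat -> measure_display)
  (X : forall n : nat, measurableType (d n))
  (mu : forall n, probability (X n) R) (f : forall n, X n -> X n.+1)
  (hNDS : metric_NDS R d X mu f)
  (F : set (pseq d X)) (hF0 : F !=set0) (hF : F `<=` Emax d X) :
  [/\ admissible d X f (Hcl R d X f mu F),
      F `<=` Hcl R d X f mu F /\ Hcl R d X f mu F `<=` Emax d X,
      Ecl d X f F `<=` Hcl R d X f mu F,
      hE R d X f mu (Ecl d X f F) = hE R d X f mu (Hcl R d X f mu F)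
    & hE R d X f mu (Hcl R d X f mu F) = ereal_sup [set hP R d X f mu P | P in F]].
Proof.
case: hNDS => mf _.
have ne : forall n, [set: X n] !=set0.
  move=> n; case: (pselect ([set: X n] !=set0)) => // h; exfalso.
  have e : [set: X n] = set0 by apply/seteqP; split => // x _; apply: h; exists x.
  have := probability_setT (mu n); rewrite e measure0 => h01.
  by case: h01 => /eqP; rewrite eq_sym oner_eq0.
have hPE : forall P, hP R d X f mu P =
    Ls (fun n => ((n%:R)^-1 * ent (mu 0) (jn d X f P 0 n))%:E).
  by move=> P; rewrite /hP limn_esupLs.
have KB : forall P Q, Emax d X P -> Emax d X Q -> coarser d X Q P ->
    (hP R d X f mu Q <= hP R d X f mu P)%E.
  move=> P Q /EmaxP [hP1 [CP hCP]] /EmaxP [hQ1 [CQ hCQ]] hco.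
  rewrite !hPE; apply: Ls_mono => n; rewrite lee_fin; apply: ler_wpM2l.
    by rewrite invr_ge0.
  exact: (@ent_coarser d X f mf ne R (mu 0) P Q CP CQ hP1 hCP hQ1 hCQ hco n).
have KC : forall P m, Emax d X P ->
    Emax d X (fun k => jn d X f P k m.+1) /\
    (hP R d X f mu (fun k => jn d X f P k m.+1) <= hP R d X f mu P)%E.
  move=> P m /EmaxP [hP1 [CP hCP]]; split.
    apply/EmaxP; split.
      by move=> k; exact: (@jn_part d X f mf ne P CP hP1 hCP k m.+1).1.
    by exists (CP ^ m.+1)%N => k; exact: (@jn_part d X f mf ne P CP hP1 hCP k m.+1).2.
  rewrite !hPE.
  apply: (le_trans _ (@Ls_vanish R (fun n => ent (mu 0) (jn d X f P 0 n)) (m * CP)%:R _)); last first.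
    by rewrite ler0n.
  apply: Ls_mono => n; rewrite lee_fin; apply: ler_wpM2l.
    by rewrite invr_ge0.
  apply: (le_trans (@ent_Pm d X f mf ne R (mu 0) P CP hP1 hCP m n)).
  exact: (@ent_shift d X f mf ne R (mu 0) P CP hP1 hCP n m).
set HF := Hcl R d X f mu F.
have FH : F `<=` HF by move=> P FP; split; [exact: hF | exists P].
have HE : HF `<=` Emax d X by move=> P [].
have adm : admissible d X f HF.
  split => //.
  - by case: hF0 => P FP; exists P; apply: FH.
  - move=> P Q [EP [P' FP' le]] EQ hco; split => //; exists P' => //.
    exact: (le_trans (KB P Q EP EQ hco) le).
  - move=> P [|m] [EP [P' FP' le]] // _.
    have [h1 h2] := KC P m EP; split => //; exists P' => //.
    exact: (le_trans h2 le).
have EH : Ecl d X f F `<=` HF by move=> P hP; apply: hP.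
have FE : F `<=` Ecl d X f F by move=> P FP E _ FE; apply: FE.
have supHF : hE R d X f mu HF = ereal_sup [set hP R d X f mu P | P in F].
  apply/eqP; rewrite eq_le; apply/andP; split.
    apply: ge_ereal_sup => _ [Q [_ [P FP le]] <-].
    by apply: (le_trans le); apply: ereal_sup_ubound; exists P.
  by apply: le_ereal_sup => _ [P FP <-]; exists P => //; apply: FH.
split => //.
apply/eqP; rewrite eq_le; apply/andP; split.
  by apply: le_ereal_sup => _ [P FP <-]; exists P => //; apply: EH.
rewrite supHF; apply: le_ereal_sup => _ [P FP <-]; exists P => //; exact: FE.
Qed.
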